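(* Let $A$ be a positive operator on a real or complex Hilbert space which has a projection decomposition. Then either $A$ is a self-adjoint projection or $\|A\|>1$.
   Context: A positive operator $A$ has a projection decomposition if $A$ can be written as the sum of a finite or infinite sequence of (not necessarily mutually orthogonal) self-adjoint projections, with the series converging in the strong operator topology. *)

(* Defs.v *)
From HB Require Import structures.
From mathcomp Require Import all_boot all_order all_algebra.
From mathcomp Require Import boolp classical_sets reals.
From mathcomp Require Import complex.
Set Implicit Arguments. Unset Strict Implicit. Unset Printing Implicit Defensive.
Import Order.TTheory GRing.Theory Num.Theory.
Local Open Scope ring_scope.
Local Open Scope classical_set_scope.

(* Generic Hilbert-space notions over a scalar field K (which will be R or R[i])
   with conjugation [cj] and real part [re : K -> R]. *)
Section Hilbert.
Variables (R : realType) (K : numFieldType) (cj : K -> K) (re : K -> R).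
Variable (V : lmodType K).
Variable (ip : V -> V -> K).  (* inner product, linear in the first argument *)

Definition hnorm (x : V) : R := Num.sqrt (re (ip x x)).

Definition hcauchy (u : nat -> V) : Prop :=
  forall e : R, 0 < e -> exists N : nat, forall m n : nat,
    (N <= m)%N -> (N <= n)%N -> hnorm (u m - u n) < e.

Definition hconverges (u : nat -> V) (l : V) : Prop :=
  forall e : R, 0 < e -> exists N : nat, forall n : nat,
    (N <= n)%N -> hnorm (u n - l) < e.

Definition is_hilbert : Prop :=
  [/\ (forall (a : K) (x y z : V), ip (a *: x + y) z = a * ip x z + ip y z),
      (forall x y : V, ip y x = cj (ip x y)),
      (forall x : V, 0 <= ip x x),
      (forall x : V, ip x x = 0 -> x = 0)
    & (forall u : nat -> V, hcauchy u -> exists l : V, hconverges u l)].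

Definition bounded_op (A : V -> V) : Prop :=
  (forall (a : K) (x y : V), A (a *: x + y) = a *: A x + A y) /\
  (exists M : R, forall x : V, hnorm (A x) <= M * hnorm x).

Definition self_adjoint (A : V -> V) : Prop :=
  bounded_op A /\ forall x y : V, ip (A x) y = ip x (A y).

Definition positive_op (A : V -> V) : Prop :=
  self_adjoint A /\ forall x : V, 0 <= ip (A x) x.

Definition sa_projection (P : V -> V) : Prop :=
  self_adjoint P /\ forall x : V, P (P x) = P x.

Definition has_projection_decomposition (A : V -> V) : Prop :=
  (exists (n : nat) (P : nat -> V -> V),
      (forall i : nat, (i < n)%N -> sa_projection (P i)) /\
      (forall x : V, A x = \sum_(i < n) P i x)) \/
  (exists P : nat -> V -> V,
      (forall i : nat, sa_projection (P i)) /\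
      (forall x : V, hconverges (fun n => \sum_(i < n) P i x) (A x))).

Definition opnorm (A : V -> V) : R :=
  sup [set hnorm (A x) | x in [set x : V | hnorm x <= 1]].

End Hilbert.

Definition lemma9_for (R : realType) (K : numFieldType) (cj : K -> K) (re : K -> R) : Prop :=
  forall (V : lmodType K) (ip : V -> V -> K) (A : V -> V),
    is_hilbert cj re ip ->
    positive_op re ip A ->
    has_projection_decomposition re ip A ->
    sa_projection re ip A \/ 1 < opnorm re ip A.

(* Main.v *)
Require Import Defs.
From HB Require Import structures.
From mathcomp Require Import all_boot all_order all_algebra.
From mathcomp Require Import boolp classical_sets reals.
From mathcomp Require Import complex.
From mathcomp Require Import ring lra.
Module GenM.
Set Implicit Arguments. Unset Strict Implicit. Unset Printing Implicit Defensive.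
Import Order.TTheory GRing.Theory Num.Theory.
Local Open Scope ring_scope.

Section Gen.
Variables (R : realType) (K : numFieldType) (cj : K -> K) (re : K -> R) (emb : R -> K).
Hypothesis cjD : forall a b, cj (a + b) = cj a + cj b.
Hypothesis cjM : forall a b, cj (a * b) = cj a * cj b.
Hypothesis cj_emb : forall r, cj (emb r) = emb r.
Hypothesis reD : forall a b, re (a + b) = re a + re b.
Hypothesis re_cj : forall z, re (cj z) = re z.
Hypothesis reM_emb : forall r z, re (emb r * z) = r * re z.
Hypothesis re_ge0 : forall z, 0 <= z -> 0 <= re z.
Hypothesis re_eq0 : forall z, 0 <= z -> re z = 0 -> z = 0.

Variables (V : lmodType K) (ip : V -> V -> K).
Hypothesis H : is_hilbert cj re ip.

Let ipL : forall a x y z, ip (a *: x + y) z = a * ip x z + ip y z.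
Proof. by case: H. Qed.
Let ipS : forall x y, ip y x = cj (ip x y).
Proof. by case: H. Qed.
Let ipP : forall x, 0 <= ip x x.
Proof. by case: H. Qed.
Let ipE : forall x, ip x x = 0 -> x = 0.
Proof. by case: H. Qed.

Lemma re0 : re 0 = 0.
Proof. by have := reD 0 0; rewrite addr0 => /eqP; rewrite -subr_eq addrN eq_sym => /eqP. Qed.
Lemma reN z : re (- z) = - re z.
Proof. by apply/eqP; rewrite -subr_eq0 opprK -reD addNr re0. Qed.
Lemma reB a b : re (a - b) = re a - re b.
Proof. by rewrite reD reN. Qed.
Lemma cj0 : cj 0 = 0.
Proof. by have := cjD 0 0; rewrite addr0 => /eqP; rewrite -subr_eq addrN eq_sym => /eqP. Qed.
Lemma cjN z : cj (- z) = - cj z.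
Proof. by apply/eqP; rewrite -subr_eq0 opprK -cjD addNr cj0. Qed.

Lemma ip0l z : ip 0 z = 0.
Proof.
have := ipL 1 0 0 z; rewrite scaler0 addr0 mul1r => /eqP.
by rewrite -subr_eq addrN eq_sym => /eqP.
Qed.
Lemma ipDl x y z : ip (x + y) z = ip x z + ip y z.
Proof. by have := ipL 1 x y z; rewrite scale1r mul1r. Qed.
Lemma ipZl a x z : ip (a *: x) z = a * ip x z.
Proof. by have := ipL a x 0 z; rewrite addr0 ip0l addr0. Qed.
Lemma ipNl x z : ip (- x) z = - ip x z.
Proof. by rewrite -scaleN1r ipZl mulN1r. Qed.
Lemma ipBl x y z : ip (x - y) z = ip x z - ip y z.
Proof. by rewrite ipDl ipNl. Qed.
Lemma ipDr x y z : ip z (x + y) = ip z x + ip z y.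
Proof. by rewrite ipS ipDl cjD -!ipS. Qed.
Lemma ipNr x z : ip z (- x) = - ip z x.
Proof. by rewrite ipS ipNl cjN -ipS. Qed.
Lemma ipBr x y z : ip z (x - y) = ip z x - ip z y.
Proof. by rewrite ipDr ipNr. Qed.
Lemma ip0r z : ip z 0 = 0.
Proof. by rewrite ipS ip0l cj0. Qed.
Lemma ipembr r x z : ip z (emb r *: x) = emb r * ip z x.
Proof. by rewrite ipS ipZl cjM cj_emb -ipS. Qed.
Lemma re_ipC x y : re (ip x y) = re (ip y x).
Proof. by rewrite ipS re_cj. Qed.

Definition N x := re (ip x x).
Lemma N_ge0 x : 0 <= N x. Proof. exact: re_ge0. Qed.
Lemma N_eq0 x : N x = 0 -> x = 0. Proof. by move=> h; apply: ipE; apply: re_eq0. Qed.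
Lemma N0 : N 0 = 0. Proof. by rewrite /N ip0l re0. Qed.
Lemma NB x y : N (x - y) = N x - (re (ip x y)) *+ 2 + N y.
Proof.
rewrite /N ipBl !ipBr !reB (re_ipC y x).
rewrite mulr2n; set a := re (ip x x); set b := re (ip x y); set c := re (ip y y).
by rewrite opprB; lra.
Qed.
Lemma ND x y : N (x + y) = N x + (re (ip x y)) *+ 2 + N y.
Proof.
have := NB x (- y); rewrite opprK => ->.
by rewrite ipNr reN /N ipNl ipNr opprK mulNrn opprK.
Qed.
Lemma Nemb r x : N (emb r *: x) = r ^+ 2 * N x.
Proof. by rewrite /N ipZl ipembr !reM_emb mulrA expr2. Qed.

Lemma CS x y : re (ip x y) ^+ 2 <= N x * N y.
Proof.
have [y0|ny] := eqVneq (N y) 0.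
  by rewrite (N_eq0 y0) ip0r re0 expr0n /= N0 mulr0.
have Ny : 0 < N y by rewrite lt_neqAle eq_sym ny N_ge0.
set r := re (ip x y); set t := r / N y.
have := N_ge0 (x - emb t *: y).
rewrite NB ipembr reM_emb Nemb.
have -> : t ^+ 2 * N y = r ^+ 2 / N y.
  by rewrite /t expr2 expr2; field; rewrite ny.
have -> : (t * r) *+ 2 = (r ^+ 2 / N y) *+ 2.
  by rewrite /t expr2 mulrAC.
rewrite mulr2n => hh. have : 0 <= N x - r ^+ 2 / N y by lra. rewrite subr_ge0.
by rewrite ler_pdivrMr.
Qed.

Notation hn := (hnorm re ip).

Lemma hn_ge0 x : 0 <= hn x. Proof. exact: sqrtr_ge0. Qed.
Lemma hnE x : hn x ^+ 2 = N x. Proof. by rewrite sqr_sqrtr // N_ge0. Qed.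
Lemma hn_eq0 x : hn x = 0 -> x = 0.
Proof. by move=> h; apply: N_eq0; rewrite -hnE h expr0n. Qed.
Lemma hn0 : hn 0 = 0. Proof. by rewrite /hnorm -/(N 0) N0 sqrtr0. Qed.
Lemma hnN x : hn (- x) = hn x.
Proof. by rewrite /hnorm ipNl ipNr opprK. Qed.
Lemma hn_emb r x : hn (emb r *: x) = `|r| * hn x.
Proof.
rewrite /hnorm -/(N _) Nemb sqrtrM ?sqrtr_sqr //.
by rewrite exprn_even_ge0.
Qed.
Lemma CSabs x y : `|re (ip x y)| <= hn x * hn y.
Proof.
rewrite -sqrtr_sqr /hnorm -sqrtrM ?N_ge0 // ler_sqrt ?mulr_ge0 ?N_ge0 //.
exact: CS.
Qed.
Lemma hn_tri x y : hn (x + y) <= hn x + hn y.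
Proof.
have h0 : 0 <= hn x + hn y by rewrite addr_ge0 ?hn_ge0.
rewrite -(ger0_norm h0) -sqrtr_sqr /hnorm ler_sqrt ?exprn_even_ge0 //.
rewrite -/(N _) ND sqrrD -!/(hn _) !hnE.
have := CSabs x y; have := ler_norm (re (ip x y)).
rewrite -/(N x) -/(N y) => h1 h2.
rewrite !mulr2n; lra.
Qed.

Lemma hconv_uniq u l1 l2 : hconverges re ip u l1 -> hconverges re ip u l2 -> l1 = l2.
Proof.
move=> h1 h2; apply/eqP; rewrite -subr_eq0; apply/eqP; apply: hn_eq0.
apply/eqP; rewrite eq_le hn_ge0 andbT; apply/negP => /negP; rewrite -ltNge => hp.
have e0 : 0 < hn (l1 - l2) / 2 by rewrite divr_gt0.
have [n1 Hn1] := h1 _ e0; have [n2 Hn2] := h2 _ e0.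
have a1 := Hn1 (maxn n1 n2) (leq_maxl _ _).
have a2 := Hn2 (maxn n1 n2) (leq_maxr _ _).
set w := u (maxn n1 n2).
have : hn (l1 - l2) <= hn (w - l2) + hn (- (w - l1)).
  have -> : l1 - l2 = (w - l2) + - (w - l1).
    by rewrite opprB [RHS]addrC addrA subrK.
  exact: hn_tri.
rewrite hnN; lra.
Qed.

Section Op.
Variable A : V -> V.
Hypothesis Ab : bounded_op re ip A.
Let AL : forall a x y, A (a *: x + y) = a *: A x + A y.
Proof. by case: Ab. Qed.
Lemma A0 : A 0 = 0.
Proof.
have := AL 1 0 0; rewrite scaler0 addr0 scale1r => /eqP.
by rewrite -subr_eq addrN eq_sym => /eqP.
Qed.
Lemma AD x y : A (x + y) = A x + A y.
Proof. by have := AL 1 x y; rewrite !scale1r. Qed.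
Lemma AZ a x : A (a *: x) = a *: A x.
Proof. by have := AL a x 0; rewrite !addr0 A0 addr0. Qed.
Lemma AB x y : A (x - y) = A x - A y.
Proof. by rewrite AD -scaleN1r AZ scaleN1r. Qed.
Lemma A_sum n (f : nat -> V) : A (\sum_(i < n) f i) = \sum_(i < n) A (f i).
Proof.
elim: n => [|n IH]; first by rewrite !big_ord0 A0.
by rewrite !big_ord_recr /= AD IH.
Qed.

Lemma hconv_A u l : hconverges re ip u l -> hconverges re ip (fun n => A (u n)) (A l).
Proof.
case: Ab => _ [M HM] hc e e0.
have M1 : 0 < `|M| + 1 by rewrite ltr_wpDl.
have [n0 Hn0] := hc (e / (`|M| + 1)) (divr_gt0 e0 M1).
exists n0 => n hnn; rewrite -AB.
apply: (le_lt_trans (HM _)).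
have h1 : M * hn (u n - l) <= (`|M| + 1) * hn (u n - l).
  by rewrite ler_wpM2r ?hn_ge0 // (le_trans (ler_norm M)) // lerDl.
have h2 : (`|M| + 1) * hn (u n - l) < e.
  by rewrite mulrC -ltr_pdivlMr // Hn0.
exact: le_lt_trans h1 h2.
Qed.

Lemma opnorm_le1 : opnorm re ip A <= 1 -> forall x, N (A x) <= N x.
Proof.
move=> hop.
have hsup : forall y, hn y <= 1 -> hn (A y) <= 1.
  move=> y hy; apply: le_trans hop.
  apply: sup_upper_bound; last by exists y.
  split; first by exists (hn (A 0)), 0; rewrite //= hn0 ler01.
  case: Ab => _ [M HM]; exists `|M| => _ [z /= hz <-].
  apply: (le_trans (HM z)).
  have h1 : M * hn z <= `|M| * hn z by rewrite ler_wpM2r ?hn_ge0 ?ler_norm.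
  apply: le_trans h1 _.
  by rewrite ler_piMr.
move=> x.
have [hx0|hx] := eqVneq (hn x) 0.
  by rewrite (hn_eq0 hx0) A0 N0.
have hxp : 0 < hn x by rewrite lt_neqAle eq_sym hx hn_ge0.
have := hsup (emb (hn x)^-1 *: x).
rewrite AZ !hn_emb ger0_norm ?invr_ge0 ?hn_ge0 // mulVf // lexx => /(_ isT).
rewrite mulrC ler_pdivrMr // mul1r => h.
rewrite -!hnE; rewrite ler_pXn2r ?nnegrE ?hn_ge0 //.
Qed.
End Op.

Lemma ip_sum n (f : nat -> V) z : ip (\sum_(i < n) f i) z = \sum_(i < n) ip (f i) z.
Proof.
elim: n => [|n IH]; first by rewrite !big_ord0 ip0l.
by rewrite !big_ord_recr /= ipDl IH.
Qed.
Lemma re_sum n (f : nat -> K) : re (\sum_(i < n) f i) = \sum_(i < n) re (f i).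
Proof.
elim: n => [|n IH]; first by rewrite !big_ord0 re0.
by rewrite !big_ord_recr /= reD IH.
Qed.

Lemma proj_ip P x : sa_projection re ip P -> re (ip (P x) x) = N (P x).
Proof. by case=> [[_ hs] hp]; rewrite -{1}hp hs. Qed.

Lemma sum_ge_term n (f : nat -> R) j : (j < n)%N -> (forall i, (i < n)%N -> 0 <= f i) ->
  f j <= \sum_(i < n) f i.
Proof.
move=> hj hf; rewrite (bigD1 (Ordinal hj)) //= lerDl.
by apply: sumr_ge0 => i _; apply: hf.
Qed.

Lemma limit_ge u l z c m : hconverges re ip u l ->
  (forall n, (m <= n)%N -> c <= re (ip (u n) z)) -> c <= re (ip l z).
Proof.
move=> hc hge; rewrite leNgt; apply/negP => hlt.
set d := c - re (ip l z).
have d0 : 0 < d by rewrite subr_gt0.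
have z1 : 0 < hn z + 1 by rewrite ltr_wpDl ?hn_ge0.
have [n0 Hn0] := hc (d / (hn z + 1)) (divr_gt0 d0 z1).
have hh := Hn0 (maxn n0 m) (leq_maxl _ _).
have hg := hge (maxn n0 m) (leq_maxr _ _).
set w := u (maxn n0 m) in hh hg.
have e1 : re (ip w z) = re (ip l z) + re (ip (w - l) z).
  by rewrite ipBl reB addrC subrK.
have cs := CSabs (w - l) z.
have := ler_norm (re (ip (w - l) z)).
have h3 : hn (w - l) * hn z <= d / (hn z + 1) * hn z.
  by rewrite ler_wpM2r ?hn_ge0 ?ltW.
have h4 : d / (hn z + 1) * hn z < d.
  by rewrite mulrAC ltr_pdivrMr // ltr_pM2l // ltrDl.
rewrite /d in h3 h4 *; lra.
Qed.

Theorem main_gen (A : V -> V) :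
  positive_op re ip A -> has_projection_decomposition re ip A ->
  sa_projection re ip A \/ 1 < opnorm re ip A.
Proof.
move=> [Asa Apos] hdec.
case: (ltP 1 (opnorm re ip A)) => [h|hle]; [by right | left].
split => //.
have Ab : bounded_op re ip A by case: Asa.
have hsa : forall x y, ip (A x) y = ip x (A y) by case: Asa.
have Hle := opnorm_le1 Ab hle.
have key : forall x, N x <= re (ip (A x) x) -> A x = x.
  move=> x hx; apply/eqP; rewrite -subr_eq0; apply/eqP; apply: N_eq0.
  apply/eqP; rewrite eq_le N_ge0 andbT NB.
  have := Hle x; rewrite /N in hx *; lra.
case: hdec => [[n [P [HP HA]]] | [P [HP HA]]] x.
- have fix1 : forall j v, (j < n)%N -> A (P j v) = P j v.
    move=> j v hj; apply: key.
    set y := P j v.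
    have Py : P j y = y by case: (HP j hj) => _ ->.
    rewrite HA (ip_sum _ (fun i => P i y)) (re_sum _ (fun i => ip (P i y) y)).
    have := sum_ge_term (f := fun i => re (ip (P i y) y)) hj.
    rewrite Py => h; apply: h => i hi; rewrite proj_ip ?N_ge0 //; exact: HP.
  have e := HA x; rewrite !e.
  by rewrite (A_sum Ab _ (fun i => P i x)); apply: eq_bigr => i _; rewrite fix1.
- have fix1 : forall j v, A (P j v) = P j v.
    move=> j v; apply: key.
    set y := P j v.
    have Py : P j y = y by case: (HP j) => _ ->.
    apply: (limit_ge (m := j.+1) (HA y)) => k hk.
    rewrite (ip_sum _ (fun i => P i y)) (re_sum _ (fun i => ip (P i y) y)).
    have := sum_ge_term (f := fun i => re (ip (P i y) y)) hk.
    rewrite Py => h; apply: h => i; rewrite proj_ip ?N_ge0 //.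
  have h1 := HA x.
  have h2 := hconv_A Ab (HA x).
  apply: (hconv_uniq h2).
  move=> e e0; have [n0 Hn] := h1 e e0; exists n0 => k hk.
  rewrite (A_sum Ab _ (fun i => P i x)) (@eq_bigr _ _ _ _ _ _ _ (fun i : 'I_k => P i x)) ?Hn // => i _; by rewrite fix1.
Qed.
End Gen.

Section Cx.
Variable R : realType.
Local Notation C := (complex.complex R).
Lemma cx1 (a b : C) : complex.conjc (a + b) = complex.conjc a + complex.conjc b.
Proof. exact: rmorphD. Qed.
Lemma cx2 (a b : C) : complex.conjc (a * b) = complex.conjc a * complex.conjc b.
Proof. exact: rmorphM. Qed.
Lemma cx3 (r : R) : complex.conjc ((r%:C)%C : C) = (r%:C)%C.
Proof. exact: conjc_real. Qed.
Lemma cx4 (a b : C) : complex.Re (a + b) = complex.Re a + complex.Re b.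
Proof. by case: a; case: b. Qed.
Lemma cx5 (z : C) : complex.Re (complex.conjc z) = complex.Re z.
Proof. by case: z. Qed.
Lemma cx6 (r : R) (z : C) : complex.Re ((r%:C)%C * z) = r * complex.Re z.
Proof. by case: z => a b /=; rewrite mul0r subr0. Qed.
Lemma cx7 (z : C) : 0 <= z -> 0 <= complex.Re z.
Proof. by rewrite lecE => /andP[]. Qed.
Lemma cx8 (z : C) : 0 <= z -> complex.Re z = 0 -> z = 0.
Proof. by case: z => a b; rewrite lecE /= => /andP[/eqP -> _] ->. Qed.
End Cx.
End GenM.
Import GenM.

Theorem lemma9 (R : realType) :
  lemma9_for (K := R) (fun z : R => z) (fun z : R => z) /\
  lemma9_for (K := R[i]) (@conjc R) (@Re R).
Proof.
split.
- move=> V ip A H.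
  apply: (@main_gen R R (fun z => z) (fun z => z) (fun z => z)) => //.
- move=> V ip A H.
  apply: (@main_gen R R[i] (@conjc R) (@Re R) (fun r => (r%:C)%C)) => //.
  + exact: cx1.
  + exact: cx2.
  + exact: cx3.
  + exact: cx4.
  + exact: cx5.
  + exact: cx6.
  + exact: cx7.
  + exact: cx8.
Qed.
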